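(* Let $\mathscr H$ be a complex Hilbert space and $\mathbf{T}=(T_1,\dots,T_d)\in\mathbb{B}(\mathscr H)^d$ with $\|\mathbf{T}\|\neq 0$. Then $$\frac{1}{2\sqrt{d}}\Big(\|\mathbf{T}\|+\frac{c_e(\mathbf{T}^2)}{\|\mathbf{T}\|}\Big)\le w_e(\mathbf{T}).$$
   Context: $\mathbb{B}(\mathscr H)$ denotes the bounded linear operators on $\mathscr H$. For $\mathbf{T}=(T_1,\dots,T_d)\in\mathbb{B}(\mathscr H)^d$: the Euclidean operator radius is $w_e(\mathbf{T})=\sup\{(\sum_{k=1}^d|\langle T_kx,x\rangle|^2)^{1/2}: \|x\|=1\}$; the joint Crawford number is $c_e(\mathbf{T})=\inf\{(\sum_{k=1}^d|\langle T_kx,x\rangle|^2)^{1/2}: \|x\|=1\}$; the joint operator norm is $\|\mathbf{T}\|=\sup\{(\sum_{k=1}^d\|T_kx\|^2)^{1/2}: \|x\|=1\}$. Powers are componentwise: $\mathbf{T}^2=(T_1^2,\dots,T_d^2)$. *)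

(* Defs.v *)
From HB Require Import structures.
From mathcomp Require Import all_boot all_order all_algebra.
From mathcomp Require Import classical_sets reals.
From mathcomp Require Import complex.
Import Order.TTheory GRing.Theory Num.Theory.

Set Implicit Arguments.
Unset Strict Implicit.
Unset Printing Implicit Defensive.

Local Open Scope ring_scope.
Local Open Scope classical_set_scope.

Section Hilbert.
Variables (R : realType) (V : lmodType R[i]) (ip : V -> V -> R[i]).

Definition cmod (z : R[i]) : R := Normc.normc z.

Definition is_inner_product : Prop :=
  [/\ (forall (a : R[i]) (x y z : V), ip (a *: x + y) z = a * ip x z + ip y z),
      (forall x y : V, ip y x = conjc (ip x y)),
      (forall x : V, 0 <= ip x x) &
      (forall x : V, ip x x = 0 -> x = 0)].

Definition hnorm (x : V) : R := Num.sqrt (complex.Re (ip x x)).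

Definition ip_complete : Prop :=
  forall u : nat -> V,
    (forall e : R, 0 < e -> exists N : nat, forall m n : nat,
        (N <= m)%N -> (N <= n)%N -> hnorm (u m - u n) < e) ->
    exists l : V, forall e : R, 0 < e -> exists N : nat, forall n : nat,
        (N <= n)%N -> hnorm (u n - l) < e.

Definition is_hilbert : Prop := is_inner_product /\ ip_complete.

Definition bounded_op (T : V -> V) : Prop :=
  (forall (a : R[i]) (x y : V), T (a *: x + y) = a *: T x + T y) /\
  exists M : R, forall x : V, hnorm (T x) <= M * hnorm x.

Definition unit_sphere : set V := [set x | hnorm x = 1].

Definition op_sq (d : nat) (T : 'I_d -> V -> V) : 'I_d -> V -> V :=
  fun k x => T k (T k x).

Definition joint_numvals (d : nat) (T : 'I_d -> V -> V) : set R :=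
  (fun x => Num.sqrt (\sum_(k < d) cmod (ip (T k x) x) ^+ 2)) @` unit_sphere.

Definition w_e (d : nat) (T : 'I_d -> V -> V) : R := sup (joint_numvals T).

Definition c_e (d : nat) (T : 'I_d -> V -> V) : R := inf (joint_numvals T).

Definition joint_norm (d : nat) (T : 'I_d -> V -> V) : R :=
  sup ((fun x => Num.sqrt (\sum_(k < d) hnorm (T k x) ^+ 2)) @` unit_sphere).

End Hilbert.

(* Main.v *)
Require Import Defs.
From HB Require Import structures.
From mathcomp Require Import all_boot all_order all_algebra.
From mathcomp Require Import boolp classical_sets reals.
From mathcomp Require Import complex ring lra.
Import Order.TTheory GRing.Theory Num.Theory.
Local Open Scope ring_scope.
Local Open Scope complex_scope.
Set Implicit Arguments.
Unset Strict Implicit.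

Section Basic.
Variables (R : realType) (V : lmodType R[i]) (ip : V -> V -> R[i]).
Hypothesis IP : is_inner_product ip.

Lemma ipDZl a x y z : ip (a *: x + y) z = a * ip x z + ip y z.
Proof. by case: IP => h _ _ _; apply: h. Qed.
Lemma ipC x y : ip y x = conjc (ip x y).
Proof. by case: IP => _ h _ _; apply: h. Qed.
Lemma ip_ge0 x : 0 <= ip x x.
Proof. by case: IP => _ _ h _; apply: h. Qed.
Lemma ip_eq0 x : ip x x = 0 -> x = 0.
Proof. by case: IP => _ _ _ h; apply: h. Qed.

Lemma ip0l z : ip 0 z = 0.
Proof.
have := ipDZl 1 0 0 z; rewrite scaler0 addr0 mul1r => /(congr1 (fun t => t - ip 0 z)).
by rewrite subrr addrK.
Qed.
Lemma ipDl x y z : ip (x + y) z = ip x z + ip y z.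
Proof. by rewrite -[x]scale1r ipDZl mul1r scale1r. Qed.
Lemma ipZl a x z : ip (a *: x) z = a * ip x z.
Proof. by rewrite -[a *: x]addr0 ipDZl ip0l addr0. Qed.
Lemma ip0r z : ip z 0 = 0.
Proof. by rewrite ipC ip0l; apply/eqP; rewrite conjc_eq0. Qed.
Lemma ipDr x y z : ip z (x + y) = ip z x + ip z y.
Proof. by rewrite [LHS]ipC ipDl (ipC x z) (ipC y z) rmorphD. Qed.
Lemma ipZr a x z : ip z (a *: x) = conjc a * ip z x.
Proof. by rewrite [LHS]ipC ipZl (ipC x z) rmorphM. Qed.
Lemma ipNl x z : ip (- x) z = - ip x z.
Proof. by rewrite -scaleN1r ipZl mulN1r. Qed.
Lemma ipNr x z : ip z (- x) = - ip z x.
Proof. by rewrite -scaleN1r ipZr rmorphN rmorph1 mulN1r. Qed.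

Lemma ip_real x : ip x x = ((hnorm ip x) ^+ 2)%:C.
Proof.
have h := ip_ge0 x.
rewrite /hnorm sqr_sqrtr; last by move: h; rewrite lecE /= => /andP[].
by rewrite RRe_real //; apply: ger0_real.
Qed.

Lemma hnorm_ge0 x : 0 <= hnorm ip x.
Proof. exact: sqrtr_ge0. Qed.


Lemma ip_exp p s q t p' s' q' t' :
  ip (p *: s + q *: t) (p' *: s' + q' *: t') =
  p * conjc p' * ip s s' + p * conjc q' * ip s t' +
  q * conjc p' * ip t s' + q * conjc q' * ip t t'.
Proof. rewrite !ipDl !ipDr !ipZl !ipZr; ring. Qed.

End Basic.

Section Cx.
Variable R : realType.
Implicit Types z : R[i].

Lemma normC_cmod z : `|z| = (cmod z)%:C.
Proof. by case: z. Qed.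

Lemma conj_norm z : conjc `|z| = `|z|.
Proof. by rewrite normC_cmod conjc_real. Qed.

Lemma mul_conj z : z * conjc z = `|z| ^+ 2.
Proof. by rewrite normcE sqr_sqrtc. Qed.

Lemma cmod_real (r : R) : cmod r%:C = `|r|.
Proof.
by rewrite /cmod /= expr0n /= addr0 sqrtr_sqr.
Qed.

Lemma conjcM (a b : R[i]) : conjc (a * b) = conjc a * conjc b.
Proof. by rewrite rmorphM. Qed.
Lemma conjcD (a b : R[i]) : conjc (a + b) = conjc a + conjc b.
Proof. by rewrite rmorphD. Qed.
Lemma conjcN (a : R[i]) : conjc (- a) = - conjc a.
Proof. by rewrite rmorphN. Qed.
Lemma conjcV (a : R[i]) : conjc (a^-1) = (conjc a)^-1.
Proof. exact: conjc_inv. Qed.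

Lemma rcM (a b : R) : (a * b)%:C = a%:C * b%:C.
Proof. by rewrite rmorphM. Qed.
Lemma rcD (a b : R) : (a + b)%:C = a%:C + b%:C.
Proof. by rewrite rmorphD. Qed.
Lemma rcX (a : R) n : (a ^+ n)%:C = a%:C ^+ n.
Proof. by rewrite rmorphXn. Qed.
Lemma rcn n : (n%:R : R)%:C = n%:R.
Proof. by rewrite rmorph_nat. Qed.

Lemma cmod_ge0 z : 0 <= cmod z.
Proof. by case: z => a b; rewrite /cmod /=; apply: sqrtr_ge0. Qed.

Lemma cmod0 : cmod (0 : R[i]) = 0.
Proof. by have := cmod_real 0; rewrite normr0. Qed.

End Cx.

Section Main.
Variables (R : realType) (V : lmodType R[i]) (ip : V -> V -> R[i]).
Hypothesis IP : is_inner_product ip.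

Lemma ip_am x y : `|ip y x| *+ 2 <= ip y y + ip x x.
Proof.
set z := ip y x.
have [z0|z0] := eqVneq z 0.
  by rewrite z0 normr0 mul0rn addr_ge0 ?ip_ge0.
have nz : `|z| != 0 by rewrite normr_eq0.
have := ip_ge0 IP (1 *: y + (- (z / `|z|)) *: x).
have hc : conjc (z / `|z|) = conjc z / `|z|.
  by rewrite conjcM conjcV conj_norm.
rewrite ip_exp // (ipC IP y x) -/z conjc1 conjcN hc.
have hw : conjc z = `|z| ^+ 2 / z.
  by rewrite -mul_conj [z * _]mulrC mulfK.
rewrite hw.
have -> : 1 * 1 * ip y y + 1 * - (`|z| ^+ 2 / z / `|z|) * z +
   - (z / `|z|) * 1 * (`|z| ^+ 2 / z) + - (z / `|z|) * - (`|z| ^+ 2 / z / `|z|) * ip x x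
   = ip y y + ip x x - `|z| *+ 2.
  by field; rewrite z0 nz.
by rewrite subr_ge0.
Qed.


Lemma key (T : V -> V) (Tlin : forall a x y, T (a *: x + y) = a *: T x + T y)
  (W : R) (HW : forall u, `|ip (T u) u| <= W%:C * ip u u) x (hx : ip x x = 1) :
  hnorm ip (T x) ^+ 2 + cmod (ip (T (T x)) x) <= 2 * W * hnorm ip (T x).
Proof.
have T0 : T 0 = 0.
  have := Tlin 1 0 0.
  rewrite scaler0 addr0 scale1r.
  move=> /(congr1 (fun t => t - T 0)).
  by rewrite subrr addrK.
have TZ c z : T (c *: z) = c *: T z by rewrite -[c *: z]addr0 Tlin T0 addr0.
have TD z z' : T (z + z') = T z + T z' by have := Tlin 1 z z'; rewrite !scale1r.
set y := T x; set a := ip (T y) x; set n := hnorm ip y.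
have hyy : ip y y = (n ^+ 2)%:C by apply: ip_real.
have n0 : 0 <= n by apply: hnorm_ge0.
have [nz|nnz] := eqVneq n 0.
  have y0 : y = 0 by apply: (ip_eq0 IP); rewrite hyy nz expr0n.
  by rewrite /a y0 T0 ip0l // cmod0 nz expr0n mulr0 addr0.
have np : 0 < n by rewrite lt_def nnz n0.
set g := if a == 0 then 1 else conjc a / `|a|.
have ga : g * a = `|a|.
  rewrite /g; case: eqVneq => [->|a0]; first by rewrite mulr0 normr0.
  have na : `|a| != 0 by rewrite normr_eq0.
  by rewrite mulrAC [conjc a * a]mulrC mul_conj expr2 mulfK.
have gn : `|g| = 1.
  rewrite /g; case: eqVneq => [_|a0]; first by rewrite normr1.
  have na : `|a| != 0 by rewrite normr_eq0.
  apply/eqP; rewrite -sqrp_eq1 // -mul_conj conjcM conjcV conj_norm conjcK.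
  rewrite mulrACA [conjc a * a]mulrC mul_conj.
  by apply/eqP; field.
set b := sqrtc g.
have b2 : b ^+ 2 = g by apply: sqr_sqrtc.
have bb : b * conjc b = 1 by rewrite mul_conj -normrX b2 gn.
have nb : `|b| = 1 by apply/eqP; rewrite -sqrp_eq1 // -mul_conj bb.
have b0 : b != 0 by rewrite -normr_eq0 nb oner_neq0.
have cb : conjc b = b^-1 by apply: (mulfI b0); rewrite bb divff.
set u := n%:C *: x + b *: y; set v := n%:C *: x + (-b) *: y.
have Tu : T u = n%:C *: y + b *: T y by rewrite TD !TZ.
have Tv : T v = n%:C *: y + (-b) *: T y by rewrite TD !TZ.
have E1 : ip (T u) u - ip (T v) v = 2%:R * n%:C * (conjc b * (n^+2)%:C + b * a).
  rewrite Tu Tv !ip_exp // -/a hyy conjcN conjc_real; ring.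
have E2 : ip u u + ip v v = (4%:R * n^+2)%:C.
  rewrite !ip_exp // hx hyy conjcN conjc_real cb rcM rcX rcn.
  by field.
have H1 : `|ip (T u) u - ip (T v) v| <= W%:C * (ip u u + ip v v).
  rewrite mulrDr; apply: le_trans (ler_normB _ _) _; apply: lerD; apply: HW.
have H3 : `|conjc b * (n^+2)%:C + b * a| = (n^+2)%:C + `|a|.
  rewrite -[LHS]mul1r -nb -normrM mulrDr mulrA bb mul1r mulrA -expr2 b2 ga.
  by rewrite ger0_norm // addr_ge0 // lecR exprn_ge0.
have H2 : `|2%:R * n%:C * (conjc b * (n^+2)%:C + b * a)| = (2 * n * (n^+2 + cmod a))%:C.
  rewrite normrM H3 ger0_norm; last by rewrite mulr_ge0 // ?ler0n // lecR.
  by rewrite normC_cmod (@rcM _ (2*n)) (@rcM _ 2 n) (@rcD _ (n^+2)) (@rcn _ 2).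
move: H1; rewrite E1 H2 E2 -(@rcM _ W) lecR => H.
nra.
Qed.


Lemma unit_bound (T : V -> V) (Tlin : forall a x y, T (a *: x + y) = a *: T x + T y)
  (W : R) (W0 : 0 <= W) (HU : forall x, hnorm ip x = 1 -> cmod (ip (T x) x) <= W) u :
  `|ip (T u) u| <= W%:C * ip u u.
Proof.
have T0 : T 0 = 0.
  have := Tlin 1 0 0.
  rewrite scaler0 addr0 scale1r.
  move=> /(congr1 (fun t => t - T 0)).
  by rewrite subrr addrK.
have TZ c z : T (c *: z) = c *: T z by rewrite -[c *: z]addr0 Tlin T0 addr0.
rewrite normC_cmod (ip_real IP u) -(@rcM _ W) lecR.
set h := hnorm ip u.
have h0 : 0 <= h by apply: hnorm_ge0.
have [hz|hnz] := eqVneq h 0.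
  have u0 : u = 0 by apply: (ip_eq0 IP); rewrite (ip_real IP) -/h hz expr0n.
  by rewrite u0 T0 ip0l // cmod0 hz expr0n mulr0.
have hp : 0 < h by rewrite lt_def hnz h0.
set v := (h^-1)%:C *: u.
have hv : hnorm ip v = 1.
  apply/eqP; rewrite -sqrp_eq1; last by apply: hnorm_ge0.
  have : ip v v = 1.
    rewrite /v ipZl // ipZr // conjc_real (ip_real IP u) -/h.
    by rewrite -!rcM -[1]/(1%:C); congr (_%:C); field.
  by rewrite (ip_real IP v) -[1]/(1%:C) => /complexI ->.
have H := HU v hv.
have cM (p q : R[i]) : cmod (p * q) = cmod p * cmod q by apply: Normc.normcM.
rewrite /v TZ ipZl // ipZr // conjc_real mulrA -rcM cM cmod_real in H.
rewrite ger0_norm in H; last by rewrite mulr_ge0 // invr_ge0.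
have -> : cmod (ip (T u) u) = h ^+ 2 * (h^-1 * h^-1 * cmod (ip (T u) u)) by field.
by rewrite mulrC ler_wpM2r // exprn_ge0.
Qed.

End Main.
Section RealSums.
Variable R : realType.

Lemma sq_sum_ge (d : nat) (f : 'I_d -> R) : (forall k, 0 <= f k) ->
  \sum_k f k ^+ 2 <= (\sum_k f k) ^+ 2.
Proof.
move=> f0.
pose P (a b : R) := 0 <= a /\ b <= a ^+ 2.
have : P (\sum_k f k) (\sum_k f k ^+ 2).
  apply: (big_ind2 P).
  - by split; rewrite ?expr0n.
  - move=> a1 b1 a2 b2 [h1 h2] [h3 h4]; split; first exact: addr_ge0.
    nra.
  - by move=> k; split.
by case.
Qed.

Lemma sqrt_sum_le (d : nat) (f : 'I_d -> R) : (forall k, 0 <= f k) ->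
  Num.sqrt (\sum_k f k ^+ 2) <= \sum_k f k.
Proof.
move=> f0.
have s0 : 0 <= \sum_k f k by apply: sumr_ge0.
rewrite -(ger0_norm s0) -sqrtr_sqr ler_wsqrtr //; exact: sq_sum_ge.
Qed.

Lemma single_le (d : nat) (f : 'I_d -> R) k : (forall k, 0 <= f k) ->
  f k <= Num.sqrt (\sum_k f k ^+ 2).
Proof.
move=> f0.
rewrite -[f k](ger0_norm (f0 k)) -sqrtr_sqr ler_wsqrtr //.
rewrite (bigD1 k) //= lerDl; apply: sumr_ge0 => i _; exact: exprn_ge0.
Qed.

Lemma cs_sum (d : nat) (f : 'I_d -> R) : (forall k, 0 <= f k) ->
  \sum_k f k <= Num.sqrt d%:R * Num.sqrt (\sum_k f k ^+ 2).
Proof.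
move=> f0.
have s0 : 0 <= \sum_k f k by apply: sumr_ge0.
have H : (\sum_k f k) ^+ 2 <= d%:R * \sum_k f k ^+ 2.
  rewrite expr2 big_distrlr /=.
  apply: (@le_trans _ _ (\sum_(i < d) \sum_(j < d) (f i ^+ 2 + f j ^+ 2) / 2)).
    apply: ler_sum => i _; apply: ler_sum => j _.
    have := sqr_ge0 (f i - f j); nra.
  have E : \sum_(i < d) \sum_(j < d) (f i ^+ 2 + f j ^+ 2) / 2 =
     (\sum_(i < d) \sum_(j < d) f i ^+ 2 + \sum_(i < d) \sum_(j < d) f j ^+ 2) / 2.
    rewrite -big_split /= mulr_suml; apply: eq_bigr => i _.
    by rewrite -big_split /= mulr_suml.
  have E1 : \sum_(i < d) \sum_(j < d) f i ^+ 2 = d%:R * \sum_k f k ^+ 2.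
    by rewrite mulr_sumr; apply: eq_bigr => i _; rewrite sumr_const card_ord mulr_natl.
  have E2 : \sum_(i < d) \sum_(j < d) f j ^+ 2 = d%:R * \sum_k f k ^+ 2.
    by rewrite sumr_const card_ord mulr_natl.
  rewrite E E1 E2; lra.
rewrite -sqrtrM ?ler0n // -(ger0_norm s0) -sqrtr_sqr ler_wsqrtr //.
Qed.
End RealSums.

Local Open Scope classical_set_scope.
Lemma rcMn (R : realType) (a : R) n : (a *+ n)%:C = a%:C *+ n.
Proof. by rewrite rmorphMn. Qed.

Theorem theorem2p4 (R : realType) (V : lmodType R[i]) (ip : V -> V -> R[i])
    (d : nat) (T : 'I_d -> V -> V) :
  is_hilbert ip ->
  (forall k : 'I_d, bounded_op ip (T k)) ->
  joint_norm ip T != 0 ->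
  (2 * Num.sqrt (d%:R : R))^-1 *
    (joint_norm ip T + c_e ip (op_sq T) / joint_norm ip T)
  <= w_e ip T.
Proof.
move=> [IP _] Tb Nn0.
have Tlin k : forall a x y, T k (a *: x + y) = a *: T k x + T k y by case: (Tb k).
pose rS x := Num.sqrt (\sum_(k < d) hnorm ip (T k x) ^+ 2).
set S := (fun x => Num.sqrt (\sum_(k < d) hnorm ip (T k x) ^+ 2)) @` unit_sphere ip.
set N := joint_norm ip T in Nn0 *.
have NE : N = sup S by [].
have hS : has_sup S.
  have [//|nh] := pselect (has_sup S).
  by move: Nn0; rewrite NE sup_out // eqxx.
have [[r0 [x0 x0u _]] _] := hS.
have unit1 x : hnorm ip x = 1 -> ip x x = 1.
  by move=> hx; rewrite (ip_real IP) hx expr1n.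
have rS_le x : hnorm ip x = 1 -> rS x <= N.
  by move=> hx; rewrite NE; apply: (sup_upper_bound hS); exists x.
have N0 : 0 <= N by apply: le_trans (rS_le x0 x0u); apply: sqrtr_ge0.
have Np : 0 < N by rewrite lt_def Nn0 N0.
have n_le x k : hnorm ip x = 1 -> hnorm ip (T k x) <= N.
  move=> hx; apply: le_trans (rS_le x hx).
  by rewrite /rS; apply: (@single_le R d (fun i => hnorm ip (T i x)) k) => i; apply: hnorm_ge0.
have amk x k : hnorm ip x = 1 -> cmod (ip (T k x) x) <= (N ^+ 2 + 1) / 2.
  move=> hx; have := ip_am IP x (T k x).
  rewrite normC_cmod (ip_real IP (T k x)) unit1 // -rcMn -[1]/(1%:C) -rcD lecR.
  have := n_le x k hx; have := hnorm_ge0 ip (T k x); nra.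
set J := joint_numvals ip T.
have J0 x : J x -> 0 <= x by move=> [y _ <-]; apply: sqrtr_ge0.
have hJ : has_sup J.
  split; first by exists (Num.sqrt (\sum_(k < d) cmod (ip (T k x0) x0) ^+ 2)); exists x0.
  exists (d%:R * ((N ^+ 2 + 1) / 2)) => _ [x hx <-].
  apply: le_trans (@sqrt_sum_le R d (fun k => cmod (ip (T k x) x)) _) _; first by move=> k; apply: cmod_ge0.
  apply: (@le_trans _ _ (\sum_(k < d) ((N ^+ 2 + 1) / 2))).
    by apply: ler_sum => k _; apply: amk.
  by rewrite sumr_const card_ord mulr_natl.
set w := w_e ip T.
have wE : w = sup J by [].
have jle x : hnorm ip x = 1 -> Num.sqrt (\sum_(k < d) cmod (ip (T k x) x) ^+ 2) <= w.
  by move=> hx; rewrite wE; apply: (sup_upper_bound hJ); exists x.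
have w0 : 0 <= w by apply: le_trans (jle x0 x0u); apply: sqrtr_ge0.
have HU k x : hnorm ip x = 1 -> cmod (ip (T k x) x) <= w.
  move=> hx; apply: le_trans (jle x hx).
  by apply: (@single_le R d (fun i => cmod (ip (T i x) x)) k) => i; apply: cmod_ge0.
have keyk x k : hnorm ip x = 1 ->
    hnorm ip (T k x) ^+ 2 + cmod (ip (T k (T k x)) x) <= 2 * w * hnorm ip (T k x).
  move=> hx; apply: (key IP (Tlin k)); last exact: unit1.
  by apply: (unit_bound IP (Tlin k) w0); apply: HU.
set K := joint_numvals ip (op_sq T).
set c := c_e ip (op_sq T).
have cE : c = inf K by [].
have hK : has_lbound K by exists 0 => _ [y _ <-]; apply: sqrtr_ge0.
have c_le x : hnorm ip x = 1 -> c <= \sum_(k < d) cmod (ip (T k (T k x)) x).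
  move=> hx; rewrite cE.
  apply: le_trans (@sqrt_sum_le R d (fun k => cmod (ip (T k (T k x)) x)) _);
    last by move=> k; apply: cmod_ge0.
  by apply: (ge_inf hK); exists x.
have main x : hnorm ip x = 1 ->
    rS x ^+ 2 + c <= 2 * Num.sqrt d%:R * w * rS x.
  move=> hx.
  have s0 : 0 <= \sum_(k < d) hnorm ip (T k x) ^+ 2.
    by apply: sumr_ge0 => k _; apply: exprn_ge0; apply: hnorm_ge0.
  rewrite /rS sqr_sqrtr //.
  apply: (@le_trans _ _ (\sum_(k < d) (hnorm ip (T k x) ^+ 2 + cmod (ip (T k (T k x)) x)))).
    by rewrite big_split /= lerD2l; apply: c_le.
  apply: (@le_trans _ _ (\sum_(k < d) (2 * w * hnorm ip (T k x)))).
    by apply: ler_sum => k _; apply: keyk.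
  rewrite -mulr_sumr.
  have := (@cs_sum R d (fun k => hnorm ip (T k x))) (fun k => hnorm_ge0 ip (T k x)).
  move: w0; nra.
set B := 2 * Num.sqrt d%:R * w.
have B0 : 0 <= B by rewrite mulr_ge0 // mulr_ge0 // sqrtr_ge0.
have cB : c <= B * N - N ^+ 2.
  apply/ler_addgt0Pr => e e0.
  have eps0 : 0 < e / (2 * N) by rewrite divr_gt0 // mulr_gt0.
  have [r [x hx <-] hr] := sup_adherent eps0 hS.
  rewrite -NE in hr.
  have m := main x hx; rewrite -/B in m; have rN := rS_le x hx.
  have rx0 : 0 <= rS x by apply: sqrtr_ge0.
  have E : (2 * N) * (e / (2 * N)) = e by field; rewrite gt_eqF.
  have h1 : N - rS x < e / (2 * N) by rewrite -/(rS x) in hr; lra.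
  have h2 : 2 * N * (N - rS x) <= e.
    by rewrite -E; apply: ltW; rewrite ltr_pM2l // mulr_gt0.
  nra.
have X : N + c / N <= B.
  have : c / N <= B - N by rewrite ler_pdivrMr //; nra.
  lra.
have [z|nz] := eqVneq (2 * Num.sqrt (d%:R : R)) 0.
  by rewrite z invr0 mul0r.
have p : 0 < 2 * Num.sqrt (d%:R : R) by rewrite lt_def nz mulr_ge0 // sqrtr_ge0.
rewrite -(ler_pM2l p) mulrA divff // mul1r.
exact: X.
Qed.
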